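(* The intersection graph of $n$ axis-aligned rectangles in $\mathbb{R}^2$ admits a $3$-hop spanner of size $O(n\log n)$.
   Context: Rectangles are closed axis-aligned rectangles (including their interiors). The intersection graph has the rectangles as vertices, with an edge iff the two rectangles intersect. For a graph $G$ and integer $t\ge1$, a $t$-hop spanner is a subgraph $\widehat{G}$ of $G$ on the same vertex set such that for every edge $uv\in E(G)$ there is a $u$–$v$ path in $\widehat{G}$ with at most $t$ edges; its size is its number of edges. *)

(* Defs.v *)
From Stdlib Require Import Reals.
From mathcomp Require Import all_boot.

Set Implicit Arguments.
Unset Strict Implicit.
Unset Printing Implicit Defensive.

Record rect := Rect { xlo : R; xhi : R; ylo : R; yhi : R }.

Definition is_rect (r : rect) : Prop :=
  Rlt (xlo r) (xhi r) /\ Rlt (ylo r) (yhi r).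

Definition in_rect (r : rect) (p : R * R) : Prop :=
  (Rle (xlo r) (fst p) /\ Rle (fst p) (xhi r)) /\
  (Rle (ylo r) (snd p) /\ Rle (snd p) (yhi r)).

Definition rects_intersect (r s : rect) : Prop :=
  exists p : R * R, in_rect r p /\ in_rect s p.

Definition ig_edge (n : nat) (rs : 'I_n -> rect) (i j : 'I_n) : Prop :=
  i <> j /\ rects_intersect (rs i) (rs j).

(* A subgraph is given by its edge set H, each undirected edge {i,j}
   stored once as the ordered pair (i, j) with i < j; hence #|H| is its
   number of edges. *)
Definition hadj (n : nat) (H : {set 'I_n * 'I_n}) : rel 'I_n :=
  fun i j => ((i, j) \in H) || ((j, i) \in H).

Definition hop_spanner (n : nat) (E : 'I_n -> 'I_n -> Prop)
    (H : {set 'I_n * 'I_n}) (t : nat) : Prop :=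
  (forall i j : 'I_n, (i, j) \in H -> (i < j)%N /\ E i j) /\
  (forall i j : 'I_n, E i j ->
     exists p : seq 'I_n,
       (size p <= t)%N /\ path (hadj H) i p /\ last i p = j).

(* Main.v *)
Require Import Defs.
From Stdlib Require Import Reals Lra ClassicalEpsilon.
From mathcomp Require Import all_boot.
Set Implicit Arguments. Unset Strict Implicit. Unset Printing Implicit Defensive.

Definition pb (P : Prop) : bool := if excluded_middle_informative P then true else false.
Lemma pbP (P : Prop) : reflect P (pb P).
Proof. rewrite /pb; case: excluded_middle_informative => h; constructor; auto. Qed.

Lemma card_bigcup_le (T I : finType) (A : {pred I}) (F : I -> {set T}) :
  #|\bigcup_(i in A) F i| <= \sum_(i in A) #|F i|.
Proof.
apply: (big_ind2 (fun (X : {set T}) m => #|X| <= m)) => //.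
- by rewrite cards0.
- move=> X1 m1 X2 m2 h1 h2; apply: leq_trans (leq_card_setU _ _) _; exact: leq_add.
Qed.

Lemma ex_argmin_seq (T : eqType) (s : seq T) (P : pred T) (f : T -> R) :
  (exists x, x \in s /\ P x) ->
  exists x, P x /\ x \in s /\ forall y, y \in s -> P y -> Rle (f x) (f y).
Proof.
elim: s => [|a s IH]; first by case=> x [].
move=> [x [xin Px]].
case: (boolP (has P s)) => hs.
- have [m [Pm [ms hm]]] : exists m, P m /\ m \in s /\ forall y, y \in s -> P y -> Rle (f m) (f y).
    by apply: IH; case/hasP: hs => z zs Pz; exists z.
  clear x xin Px.
  case Pa: (P a); last first.
  + exists m; split=> //; split; first by rewrite inE ms orbT.
    move=> y; rewrite inE => /orP [/eqP -> |ys Py]; first by rewrite Pa.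
    exact: hm.
  + case: (Rle_lt_dec (f a) (f m)) => hlt.
    * exists a; split=> //; split; first by rewrite inE eqxx.
      move=> y; rewrite inE => /orP [/eqP -> _ |ys Py]; first by apply: Rle_refl.
      apply: Rle_trans hlt (hm _ ys Py).
    * exists m; split=> //; split; first by rewrite inE ms orbT.
      move=> y; rewrite inE => /orP [/eqP -> _ |ys Py]; first by apply: Rlt_le.
      exact: hm.
- have Pa : P a.
    move: xin; rewrite inE => /orP [/eqP <- //| xs].
    by move/hasPn: hs => /(_ x xs); rewrite Px.
  exists a; split=> //; split; first by rewrite inE eqxx.
  move=> y; rewrite inE => /orP [/eqP -> _ |ys Py]; first by apply: Rle_refl.
  by move/hasPn: hs => /(_ y ys); rewrite Py.
Qed.

Lemma ex_argmin (T : finType) (P : pred T) (f : T -> R) :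
  (exists x, P x) -> exists x, P x /\ forall y, P y -> Rle (f x) (f y).
Proof.
case=> x Px; have [m [Pm [_ hm]]] := @ex_argmin_seq _ (enum T) P f (ex_intro _ x (conj (mem_enum T x) Px)).
by exists m; split=> // y Py; apply: hm; rewrite ?mem_enum.
Qed.

Lemma ex_argmax (T : finType) (P : pred T) (f : T -> R) :
  (exists x, P x) -> exists x, P x /\ forall y, P y -> Rle (f y) (f x).
Proof.
move=> h; have [m [Pm hm]] := ex_argmin (fun x => Ropp (f x)) h.
by exists m; split=> // y Py; have := hm y Py; lra.
Qed.

From mathcomp Require Import zify.
From Stdlib Require Import Lia.

Lemma median (T : finType) (E : {set T}) (f : T -> R) : E != set0 ->
  exists e0, e0 \in E /\
    2 * #|[set e in E | pb (Rlt (f e) (f e0))]| <= #|E| /\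
    2 * #|[set e in E | pb (Rlt (f e0) (f e))]| <= #|E|.
Proof.
move=> /set0Pn [x xE].
pose Pm (m : R) := #|E| <= 2 * #|[set e in E | pb (Rle (f e) m)]|.
have [xm [xmE hxm]] := @ex_argmax _ (fun e => e \in E) f (ex_intro _ x xE).
have : exists y, (y \in E) && Pm (f y).
  exists xm; rewrite xmE /Pm /=.
  have -> : [set e in E | pb (Rle (f e) (f xm))] = E.
    by apply/setP => e; rewrite inE; case eE: (e \in E) => //=; apply/pbP; apply: hxm.
  lia.
move=> /(@ex_argmin _ (fun y => (y \in E) && Pm (f y)) f) [e0 [/andP [e0E Pe0] he0]].
exists e0; split=> //; split.
- rewrite leqNgt; apply/negP => hB.
  set B := [set e in E | pb (Rlt (f e) (f e0))] in hB.
  have : B != set0 by apply/set0Pn; apply/card_gt0P; lia.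
  move=> /set0Pn [b bB].
  have [j [jB hj]] := @ex_argmax _ (fun e => e \in B) f (ex_intro _ b bB).
  move: (jB); rewrite inE => /andP [jE /pbP fj].
  have : Pm (f j).
    rewrite /Pm; have : #|B| <= #|[set e in E | pb (Rle (f e) (f j))]|.
      apply: subset_leq_card; apply/subsetP => e eB; move: (eB); rewrite !inE => /andP [-> _] /=.
      by apply/pbP; apply: hj.
    lia.
  move=> Pj; have := he0 j; rewrite jE Pj => /(_ isT); lra.
- have -> : [set e in E | pb (Rlt (f e0) (f e))] = E :\: [set e in E | pb (Rle (f e) (f e0))].
    apply/setP => e; rewrite !inE; case: (e \in E) => //=; rewrite andbT.
    by apply/pbP/negP => [h /pbP h2 | h]; [lra | case: (Rlt_le_dec (f e0) (f e)) => // h2; case: h; apply/pbP].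
  rewrite cardsD.
  have -> : E :&: [set e in E | pb (Rle (f e) (f e0))] = [set e in E | pb (Rle (f e) (f e0))].
    by apply/setIidPr/subsetP => e; rewrite inE => /andP [].
  move: Pe0; rewrite /Pm; lia.
Qed.

Definition ov (r s : rect) : Prop :=
  Rle (xlo r) (xhi s) /\ Rle (xlo s) (xhi r) /\ Rle (ylo r) (yhi s) /\ Rle (ylo s) (yhi r).

Lemma ov_sym r s : ov r s -> ov s r.
Proof. by rewrite /ov; tauto. Qed.

Section Spanner.
Variable n : nat.
Variable rs : 'I_n -> rect.
Hypothesis wfx : forall i, Rle (xlo (rs i)) (xhi (rs i)).
Hypothesis wfy : forall i, Rle (ylo (rs i)) (yhi (rs i)).

Definition ue (i j : 'I_n) : 'I_n * 'I_n := if i < j then (i, j) else (j, i).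

Lemma ue_sym i j : ue i j = ue j i.
Proof.
rewrite /ue; case: (ltngtP i j) => h //.
by have -> : i = j by apply: val_inj.
Qed.

Definition st (H : {set 'I_n * 'I_n}) u v := u = v \/ (ue u v \in H /\ ov (rs u) (rs v)).
Definition reach3 H u v := exists a b, st H u a /\ st H a b /\ st H b v.

Lemma st_sym H u v : st H u v -> st H v u.
Proof. by case=> [-> | [h o]]; [left | right; rewrite ue_sym; split => //; apply: ov_sym]. Qed.

Lemma st_mono (H H' : {set 'I_n * 'I_n}) u v : H \subset H' -> st H u v -> st H' u v.
Proof. by move=> /subsetP s [-> | [h o]]; [left | right; split => //; apply: s]. Qed.

Lemma reach3_sym H u v : reach3 H u v -> reach3 H v u.
Proof. by case=> a [b [h1 [h2 h3]]]; exists b, a; split; [|split]; apply: st_sym. Qed.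

Lemma reach3_mono (H H' : {set 'I_n * 'I_n}) u v : H \subset H' -> reach3 H u v -> reach3 H' u v.
Proof. by move=> s [a [b [h1 [h2 h3]]]]; exists a, b; split; [|split]; apply: st_mono s _. Qed.

Definition yov i j := Rle (ylo (rs i)) (yhi (rs j)) /\ Rle (ylo (rs j)) (yhi (rs i)).
Definition inI i y := Rle (ylo (rs i)) y /\ Rle y (yhi (rs i)).
Definition covers (V Hs : {set 'I_n}) :=
  forall v, v \in V -> forall y, inI v y -> exists h, h \in Hs /\ inI h y.

Lemma yov_sym i j : yov i j -> yov j i.
Proof. by rewrite /yov; tauto. Qed.

Lemma inI_yov i j y : inI i y -> inI j y -> yov i j.
Proof. by rewrite /inI /yov; lra. Qed.

Lemma yov_pt i j : yov i j -> exists y, inI i y /\ inI j y.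
Proof.
rewrite /yov /inI => h; have := wfy i; have := wfy j => wj wi.
case: (Rle_lt_dec (ylo (rs i)) (ylo (rs j))) => c.
- by exists (ylo (rs j)); lra.
- by exists (ylo (rs i)); lra.
Qed.

Lemma min_cover (V : {set 'I_n}) : exists Hs : {set 'I_n},
  Hs \subset V /\ covers V Hs /\
  forall v, v \in V -> #|[set h in Hs | pb (yov v h)]| <= 3.
Proof.
pose P := fun Hs : {set 'I_n} => pb (Hs \subset V /\ covers V Hs).
have PV : P V by apply/pbP; split => // v vV y hy; exists v.
case: (@arg_minnP _ V P (fun Hs : {set 'I_n} => #|Hs|) PV) => Hs /pbP [sub cov] hmin.
exists Hs; split; [|split] => //.
move=> v vV; rewrite leqNgt; apply/negP => hM.
set M := [set h in Hs | pb (yov v h)] in hM.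
have : M != set0 by apply/set0Pn; apply/card_gt0P; lia.
move=> /set0Pn [m mM].
have [a [aM ha]] := @ex_argmin _ (fun e => e \in M) (fun e => ylo (rs e)) (ex_intro _ m mM).
have [d [dM hd]] := @ex_argmax _ (fun e => e \in M) (fun e => yhi (rs e)) (ex_intro _ m mM).
have MH : M \subset Hs by apply/subsetP => e; rewrite inE => /andP [].
pose Hs' := (Hs :\: M) :|: ([set a] :|: [set d] :|: [set v]).
have PHs' : P Hs'.
  apply/pbP; split.
  - apply/subsetP => e; rewrite !inE => /orP [/andP [_ eH] | /orP [/orP [/eqP -> | /eqP ->] | /eqP -> //]].
    + by apply: (subsetP sub).
    + by apply: (subsetP sub); apply: (subsetP MH).
    + by apply: (subsetP sub); apply: (subsetP MH).
  - move=> u uV y hy; have [h [hH hh]] := cov u uV y hy.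
    case hM' : (h \in M); last first.
      by exists h; split => //; rewrite in_setU in_setD hM' hH.
    move: (hM'); rewrite inE hH => /pbP hvh.
    move: (aM) (dM); rewrite !inE => /andP [aH /pbP hva] /andP [dH /pbP hvd].
    have := ha h hM'; have := hd h hM'; move: hvh hva hvd hh; rewrite /yov /inI => hvh hva hvd hh hd' ha'.
    case: (Rlt_le_dec y (ylo (rs v))) => c1.
      by exists a; split; [rewrite !inE eqxx /= orbT | lra].
    case: (Rlt_le_dec (yhi (rs v)) y) => c2.
      by exists d; split; [rewrite !inE eqxx /= !orbT | lra].
    by exists v; split; [rewrite !inE eqxx /= !orbT | lra].
have := hmin Hs' PHs'.
have c1 : #|Hs'| <= #|Hs :\: M| + 3.
  apply: leq_trans (leq_card_setU _ _) _; rewrite leq_add2l.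
  apply: leq_trans (leq_card_setU _ _) _.
  have -> : 3 = 2 + 1 by [].
  apply: leq_add; last by rewrite cards1.
  apply: leq_trans (leq_card_setU _ _) _.
  by rewrite !cards1.
have c2 : #|Hs :\: M| = #|Hs| - #|M|.
  by rewrite cardsD (setIidPr MH).
have c3 : #|M| <= #|Hs| by apply: subset_leq_card.
lia.
Qed.

Lemma P1 (V L : {set 'I_n}) : L \subset V ->
  (forall u v, u \in V -> v \in V -> (u \in L \/ v \in L) -> yov u v -> ov (rs u) (rs v)) ->
  exists H : {set 'I_n * 'I_n}, #|H| <= 6 * #|V| /\
    forall v l, v \in V -> l \in L -> yov v l -> reach3 H v l.
Proof.
move=> LV hreal.
have [Hs [sub [cov h3]]] := min_cover V.
pose M v := [set h in Hs | pb (yov v h)].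
pose xc v h := odflt v [pick x in L | pb (yov x v /\ yov x h)].
pose E1 := \bigcup_(l in L) [set ue l h | h in M l].
pose E2 := \bigcup_(v in V) [set ue v (xc v h) | h in M v].
exists (E1 :|: E2); split.
- apply: leq_trans (leq_card_setU _ _) _.
  have e1 : #|E1| <= 3 * #|V|.
    apply: leq_trans (card_bigcup_le _ _) _.
    apply: leq_trans (_ : \sum_(l in L) 3 <= _).
      apply: leq_sum => l lL; apply: leq_trans (leq_imset_card _ _) _.
      by apply: h3; apply: (subsetP LV).
    by rewrite sum_nat_const mulnC leq_mul2l subset_leq_card.
  have e2 : #|E2| <= 3 * #|V|.
    apply: leq_trans (card_bigcup_le _ _) _.
    apply: leq_trans (_ : \sum_(v in V) 3 <= _).
      by apply: leq_sum => v vV; apply: leq_trans (leq_imset_card _ _) _; apply: h3.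
    by rewrite sum_nat_const mulnC.
  by apply: leq_trans (leq_add e1 e2) _; rewrite -mulnDl.
- move=> v l vV lL hvl.
  have lV : l \in V by apply: (subsetP LV).
  have [y [yv yl]] := yov_pt hvl.
  have [h [hH hy]] := cov l lV y yl.
  have hV : h \in V by apply: (subsetP sub).
  have hvh : yov v h by apply: inI_yov yv hy.
  have hlh : yov l h by apply: inI_yov yl hy.
  have [x [xL [xv [xh xdef]]]] : exists x, x \in L /\ yov x v /\ yov x h /\ xc v h = x.
    rewrite /xc; case: pickP => [x /andP [xL /pbP [xv xh]] | none].
      by exists x.
    by have := none l; rewrite lL /=; move/negP; case; apply/pbP; split => //; apply: yov_sym.
  have xV : x \in V by apply: (subsetP LV).
  exists x, h; split; [|split]; right; split.
  + apply/setUP; right; apply/bigcupP; exists v => //; apply/imsetP; exists h.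
      by rewrite inE hH; apply/pbP.
    by rewrite xdef.
  + by apply: hreal => //; [right | apply: yov_sym].
  + apply/setUP; left; apply/bigcupP; exists x => //; apply/imsetP; exists h => //.
    by rewrite inE hH; apply/pbP.
  + by apply: hreal => //; left.
  + rewrite ue_sym; apply/setUP; left; apply/bigcupP; exists l => //; apply/imsetP; exists h => //.
    by rewrite inE hH; apply/pbP.
  + by apply: hreal => //; [right | apply: yov_sym].
Qed.

Lemma ov_yov u v : ov (rs u) (rs v) -> yov u v.
Proof. by rewrite /ov /yov; tauto. Qed.

Definition ep (e : 'I_n * bool) : R := if e.2 then xhi (rs e.1) else xlo (rs e.1).
Definition Ecount (A : {set 'I_n}) (a b : R) :=
  [set e : 'I_n * bool | (e.1 \in A) && pb (Rlt a (ep e) /\ Rlt (ep e) b)].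
Definition kc A a b := #|Ecount A a b|.

Definition present (A : {set 'I_n}) a b :=
  forall r, r \in A -> Rlt (xlo (rs r)) b /\ Rlt a (xhi (rs r)).

Lemma tl_half k1 K : 2 * k1 <= K -> k1 * (trunc_log 2 k1).+1 <= k1 * trunc_log 2 K.
Proof.
move=> h; case: k1 h => [|k1] h; first by rewrite !mul0n.
rewrite leq_mul2l /=; apply: trunc_log_max => //.
rewrite expnS; apply: leq_trans h; rewrite leq_mul2l /=.
exact: trunc_logP.
Qed.

Lemma case_zero (A : {set 'I_n}) a b : present A a b -> kc A a b = 0 ->
  exists H : {set 'I_n * 'I_n}, #|H| <= 6 * #|A| /\
    forall r s, r \in A -> s \in A -> ov (rs r) (rs s) -> reach3 H r s.
Proof.
move=> hp hk.
have hlong : forall r, r \in A -> Rle (xlo (rs r)) a /\ Rle b (xhi (rs r)).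
  move=> r rA; have [h1 h2] := hp r rA.
  case: (Rle_lt_dec (xlo (rs r)) a) => c1; last first.
    have : 0 < kc A a b by apply/card_gt0P; exists (r, false); rewrite inE rA /=; apply/pbP; split.
    by rewrite hk.
  case: (Rle_lt_dec b (xhi (rs r))) => c2 //.
  have : 0 < kc A a b by apply/card_gt0P; exists (r, true); rewrite inE rA /=; apply/pbP; split.
  by rewrite hk.
have [H [hH hr]] : exists H : {set 'I_n * 'I_n}, #|H| <= 6 * #|A| /\
    forall v l, v \in A -> l \in A -> yov v l -> reach3 H v l.
  apply: P1 => // u v uA vA _.
  have := hlong u uA; have := hlong v vA; have := hp u uA; have := hp v vA.
  rewrite /ov; move=> [? ?] [? ?] [? ?] [? ?] h; split; [lra | split; [lra | exact: h]].
exists H; split => // r s rA sA o; apply: hr => //; exact: ov_yov.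
Qed.

Lemma outer k : forall (a b : R) (A : {set 'I_n}), kc A a b <= k -> present A a b ->
  exists H : {set 'I_n * 'I_n},
    #|H| <= 12 * (#|A| + 2 * kc A a b * (trunc_log 2 (kc A a b)).+1) /\
    forall r s, r \in A -> s \in A -> ov (rs r) (rs s) -> reach3 H r s.
Proof.
elim: k => [|k IH] a b A hk hp.
  have hk0 : kc A a b = 0 by lia.
  have [H [hH hr]] := case_zero hp hk0.
  by exists H; split => //; rewrite hk0; lia.
case hK : (kc A a b) => [|K'].
  have [H [hH hr]] := case_zero hp hK.
  by exists H; split => //; lia.
rewrite -hK.
set K := kc A a b.
have : Ecount A a b != set0 by apply/set0Pn; apply/card_gt0P; rewrite -/(kc A a b) hK.
move=> /(median ep) [e0 [e0E [med1 med2]]].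
set m := ep e0.
have [am mb] : Rlt a m /\ Rlt m b by move: e0E; rewrite inE => /andP [_ /pbP].
pose Lg := [set r in A | pb (Rle (xlo (rs r)) a /\ Rle b (xhi (rs r)))].
pose Sh := A :\: Lg.
pose Cm := [set r in A | pb (Rle (xlo (rs r)) m /\ Rle m (xhi (rs r)))].
pose A1 := [set r in Sh | pb (Rlt (xlo (rs r)) m)].
pose A2 := [set r in Sh | pb (Rlt m (xhi (rs r)))].
have memLg r : (r \in Lg) = (r \in A) && pb (Rle (xlo (rs r)) a /\ Rle b (xhi (rs r))) by rewrite inE.
have memSh r : (r \in Sh) = (r \notin Lg) && (r \in A) by rewrite inE.
have memCm r : (r \in Cm) = (r \in A) && pb (Rle (xlo (rs r)) m /\ Rle m (xhi (rs r))) by rewrite inE.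
have memA1 r : (r \in A1) = (r \in Sh) && pb (Rlt (xlo (rs r)) m) by rewrite inE.
have memA2 r : (r \in A2) = (r \in Sh) && pb (Rlt m (xhi (rs r))) by rewrite inE.
clearbody Lg Sh Cm A1 A2.
have ShA : Sh \subset A by apply/subsetP => r; rewrite memSh => /andP [].
have A1A : A1 \subset A by apply/subsetP => r; rewrite memA1 => /andP [/(subsetP ShA)].
have A2A : A2 \subset A by apply/subsetP => r; rewrite memA2 => /andP [/(subsetP ShA)].
have k1le : 2 * kc A1 a m <= K.
  apply: leq_trans med1; rewrite leq_mul2l /=; apply: subset_leq_card; apply/subsetP => e.
  rewrite /Ecount !inE => /andP [eA1 /pbP [h1 h2]].
  rewrite (subsetP A1A _ eA1) /=; apply/andP; split; apply/pbP => //; split => //; lra.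
have k2le : 2 * kc A2 m b <= K.
  apply: leq_trans med2; rewrite leq_mul2l /=; apply: subset_leq_card; apply/subsetP => e.
  rewrite /Ecount !inE => /andP [eA2 /pbP [h1 h2]].
  rewrite (subsetP A2A _ eA2) /=; apply/andP; split; apply/pbP => //; split => //; lra.
have [H1 [hH1 hr1]] : exists H : {set 'I_n * 'I_n},
    #|H| <= 12 * (#|A1| + 2 * kc A1 a m * (trunc_log 2 (kc A1 a m)).+1) /\
    forall r s, r \in A1 -> s \in A1 -> ov (rs r) (rs s) -> reach3 H r s.
  apply: IH; first by rewrite -/K in hk; lia.
  move=> r rA1; have [h1 h2] := hp r (subsetP A1A _ rA1).
  by move: rA1; rewrite memA1 => /andP [_ /pbP h]; split.
have [H2 [hH2 hr2]] : exists H : {set 'I_n * 'I_n},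
    #|H| <= 12 * (#|A2| + 2 * kc A2 m b * (trunc_log 2 (kc A2 m b)).+1) /\
    forall r s, r \in A2 -> s \in A2 -> ov (rs r) (rs s) -> reach3 H r s.
  apply: IH; first by rewrite -/K in hk; lia.
  move=> r rA2; have [h1 h2] := hp r (subsetP A2A _ rA2).
  by move: rA2; rewrite memA2 => /andP [_ /pbP h]; split.
have [Hl [hHl hrl]] : exists H : {set 'I_n * 'I_n}, #|H| <= 6 * #|A| /\
    forall v l, v \in A -> l \in Lg -> yov v l -> reach3 H v l.
  apply: P1; first by apply/subsetP => r; rewrite memLg => /andP [].
  move=> u v uA vA hL h.
  have := hp u uA; have := hp v vA; rewrite /ov.
  case: hL; rewrite memLg => /andP [_ /pbP [l1 l2]] [? ?] [? ?]; 
    (split; [lra | split; [lra | exact: h]]).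
have [Hc [hHc hrc]] : exists H : {set 'I_n * 'I_n}, #|H| <= 6 * #|Cm| /\
    forall v l, v \in Cm -> l \in Cm -> yov v l -> reach3 H v l.
  apply: P1 => // u v uC vC _ h.
  move: uC vC; rewrite !memCm => /andP [_ /pbP [? ?]] /andP [_ /pbP [? ?]]; rewrite /ov.
  split; [lra | split; [lra | exact: h]].
pose H := Hl :|: Hc :|: H1 :|: H2.
have sl : Hl \subset H by apply/subsetP => x hx; rewrite /H !in_setU hx ?orbT.
have sc : Hc \subset H by apply/subsetP => x hx; rewrite /H !in_setU hx ?orbT.
have s1 : H1 \subset H by apply/subsetP => x hx; rewrite /H !in_setU hx ?orbT.
have s2 : H2 \subset H by apply/subsetP => x hx; rewrite /H !in_setU hx ?orbT.
exists H; split.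
- have cSh : #|Sh| <= K.
    pose f r := if pb (Rlt a (xlo (rs r))) then (r, false) else (r, true).
    have finj : injective f by move=> r1 r2; rewrite /f; do 2 case: pb => //; case.
    rewrite -(card_imset _ finj); apply: subset_leq_card; apply/subsetP => e /imsetP [r rSh ->].
    move: rSh; rewrite memSh => /andP [nL rA]; have [h1 h2] := hp r rA.
    rewrite /f; case: pbP => c1 /=; rewrite /Ecount inE rA /=; apply/pbP; rewrite /ep /=; first by split.
    split => //; case: (Rle_lt_dec b (xhi (rs r))) => // c2.
    by move: nL; rewrite memLg rA /=; case/negP; apply/pbP; split => //; lra.
  have cA1 : #|A1| <= #|Sh| by apply: subset_leq_card; apply/subsetP => r; rewrite memA1 => /andP [].
  have cA2 : #|A2| <= #|Sh| by apply: subset_leq_card; apply/subsetP => r; rewrite memA2 => /andP [].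
  have cCm : #|Cm| <= #|A| by apply: subset_leq_card; apply/subsetP => r; rewrite memCm => /andP [].
  have t1 := tl_half k1le; have t2 := tl_half k2le.
  have cH : #|H| <= #|Hl| + #|Hc| + #|H1| + #|H2|.
    rewrite /H; apply: leq_trans (leq_card_setU _ _) _; rewrite leq_add2r.
    apply: leq_trans (leq_card_setU _ _) _; rewrite leq_add2r.
    exact: leq_card_setU.
  set k1 := kc A1 a m in hH1 t1 k1le; set k2 := kc A2 m b in hH2 t2 k2le.
  set tK := trunc_log 2 K in t1 t2 *.
  set p1 := k1 * (trunc_log 2 k1).+1 in hH1 t1.
  set p2 := k2 * (trunc_log 2 k2).+1 in hH2 t2.
  have q : k1 * tK + k2 * tK <= K * tK by rewrite -mulnDl leq_mul2r; apply/orP; right; lia.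
  rewrite -!mulnA in hH1 hH2 *.
  rewrite -/p1 -/p2 in hH1 hH2.
  have eK : K * tK.+1 = K * tK + K by rewrite mulnS addnC.
  rewrite eK.
  move: hH1 hH2 t1 t2 q cSh cA1 cA2 cCm cH hHl hHc k1le k2le.
  generalize (K * tK) (k1 * tK) (k2 * tK) => X Y Z.
  lia.
- have key : forall r s, r \in A -> s \in A -> r \notin Lg -> s \notin Lg -> r \notin Cm ->
      ov (rs r) (rs s) -> reach3 H r s.
    move=> r s rA sA rL sL rC o'.
    have rSh : r \in Sh by rewrite memSh rL.
    have sSh : s \in Sh by rewrite memSh sL.
    move: o'; rewrite /ov => o'.
    have := wfx r; have := wfx s => ws wr.
    case: (Rlt_le_dec (xhi (rs r)) m) => c1.
      apply: reach3_mono s1 _; apply: hr1; rewrite ?memA1 ?rSh ?sSh /=; try (apply/pbP; lra).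
      by rewrite /ov.
    case: (Rlt_le_dec m (xlo (rs r))) => c2.
      apply: reach3_mono s2 _; apply: hr2; rewrite ?memA2 ?rSh ?sSh /=; try (apply/pbP; lra).
      by rewrite /ov.
    by move: rC; rewrite memCm rA /=; case/negP; apply/pbP; split.
  move=> r s rA sA o.
  case: (boolP (r \in Lg)) => rL.
    by apply: reach3_sym; apply: reach3_mono sl _; apply: hrl => //; apply: ov_yov; apply: ov_sym.
  case: (boolP (s \in Lg)) => sL.
    by apply: reach3_mono sl _; apply: hrl => //; apply: ov_yov.
  case: (boolP (r \in Cm)) => rC; last by apply: key.
  case: (boolP (s \in Cm)) => sC; last by apply: reach3_sym; apply: key => //; apply: ov_sym.
  by apply: reach3_mono sc _; apply: hrc => //; apply: ov_yov.
Qed.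

End Spanner.

Lemma ri_ov r s : rects_intersect r s -> ov r s.
Proof. by case=> [[x y]] [[[h1 h2] [h3 h4]] [[h5 h6] [h7 h8]]]; rewrite /ov /=; simpl in *; lra. Qed.

Lemma ov_ri r s : Rle (xlo r) (xhi r) -> Rle (ylo r) (yhi r) ->
  Rle (xlo s) (xhi s) -> Rle (ylo s) (yhi s) -> ov r s -> rects_intersect r s.
Proof.
move=> h1 h2 h3 h4 [o1 [o2 [o3 o4]]].
case: (Rle_lt_dec (xlo r) (xlo s)) => c1; case: (Rle_lt_dec (ylo r) (ylo s)) => c2.
- by exists (xlo s, ylo s); rewrite /in_rect /=; lra.
- by exists (xlo s, ylo r); rewrite /in_rect /=; lra.
- by exists (xlo r, ylo s); rewrite /in_rect /=; lra.
- by exists (xlo r, ylo r); rewrite /in_rect /=; lra.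
Qed.

Section Final.
Open Scope R_scope.

Lemma INR_expn2 t : INR (2 ^ t)%nat = pow 2 t.
Proof.
elim: t => [|t IH] /=; first by [].
rewrite expnS -IH; change (INR (Nat.mul 2 (2 ^ t)%nat) = 2 * INR (2 ^ t)%nat).
by rewrite mult_INR; simpl; lra.
Qed.

Lemma ln_le' x y : 0 < x -> x <= y -> ln x <= ln y.
Proof.
move=> hx hxy; case: (Rle_lt_or_eq_dec _ _ hxy) => h.
- by apply: Rlt_le; apply: ln_increasing.
- by rewrite h; apply: Rle_refl.
Qed.

Lemma real_bound (N c t x l2 : R) : 2 <= N -> / 2 < l2 -> l2 <= x -> 0 <= t ->
  t * l2 <= l2 + x -> c <= 12 * N + 48 * N * (t + 1) -> c <= 500 * N * x.
Proof.
move=> hN hl hx ht htl hc.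
have t4 : t <= 4 * x by nra.
nra.
Qed.

End Final.

Lemma path_step n (H : {set 'I_n * 'I_n}) k (a b c : 'I_n) :
  (a = b \/ hadj H a b) ->
  (exists p, size p <= k /\ path (hadj H) b p /\ last b p = c) ->
  exists p, size p <= k.+1 /\ path (hadj H) a p /\ last a p = c.
Proof.
case=> [-> | hab] [p [sp [pp lp]]].
- by exists p; split => //; apply: leq_trans sp _.
- by exists (b :: p); split => //=; rewrite hab.
Qed.

Theorem theorem20 :
  exists C : R, Rlt 0 C /\
    forall (n : nat) (rs : 'I_n -> rect),
      (forall i, is_rect (rs i)) ->
      exists H : {set 'I_n * 'I_n},
        hop_spanner (ig_edge rs) H 3 /\
        Rle (INR #|H|) (Rmult (Rmult C (INR n)) (ln (INR n))).
Proof.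
exists (IZR 500); split; first lra.
move=> n rs hr.
have wfx i : Rle (xlo (rs i)) (xhi (rs i)) by case: (hr i) => h _; apply: Rlt_le.
have wfy i : Rle (ylo (rs i)) (yhi (rs i)) by case: (hr i) => _ h; apply: Rlt_le.
have [a [b hp]] : exists a b, present rs setT a b.
  case: (pickP (@predT 'I_n)) => [i0 _ | none]; last first.
    by exists (IZR 0), (IZR 0) => r; have := none r.
  have [j [_ hj]] := @ex_argmin _ predT (fun i => xhi (rs i)) (ex_intro _ i0 isT).
  have [k [_ hk]] := @ex_argmax _ predT (fun i => xlo (rs i)) (ex_intro _ i0 isT).
  exists (Rminus (xhi (rs j)) (IZR 1)), (Rplus (xlo (rs k)) (IZR 1)) => r _; have := hj r isT; have := hk r isT; lra.
have [Hr [hHr hreach]] := outer wfx wfy (leqnn _) hp.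
pose H := [set p in Hr | (p.1 < p.2) && pb (rects_intersect (rs p.1) (rs p.2))].
have sth u v : st rs Hr u v -> u = v \/ hadj H u v.
  case: (eqVneq u v) => [-> _| neq]; first by left.
  case=> [e | [hue o]]; first by left.
  right; have ri : rects_intersect (rs u) (rs v) by apply: ov_ri.
  have ri' : rects_intersect (rs v) (rs u) by apply: ov_ri => //; apply: ov_sym.
  move: hue; rewrite /hadj /ue !inE /=; case: (ltngtP u v) => h hue.
  - by rewrite hue /=; apply/orP; left; apply/pbP.
  - by rewrite hue /=; apply/orP; right; apply/pbP.
  - by case/eqP: neq; apply: val_inj.
exists H; split.
- split.
  + move=> i j; rewrite inE => /andP [_ /andP [lt /pbP ri]]; split => //; split => // e.
    by rewrite e ltnn in lt.
  + move=> i j [neq ri].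
    have [x [y [h1 [h2 h3]]]] := hreach i j (in_setT _) (in_setT _) (ri_ov ri).
    apply: path_step (sth _ _ h1) _; apply: path_step (sth _ _ h2) _.
    apply: path_step (sth _ _ h3) _.
    by exists [::].
- have cH : #|H| <= #|Hr| by apply: subset_leq_card; apply/subsetP => p; rewrite inE => /andP [].
  set K := kc rs setT a b in hHr.
  have cK : K <= 2 * n.
    rewrite /K /kc; apply: leq_trans (max_card _) _.
    by rewrite card_prod card_ord card_bool mulnC.
  rewrite cardsT card_ord in hHr.
  have [n01 | n2] : (n <= 1)%N \/ (2 <= n)%N by lia.
    have -> : #|H| = 0%N.
      apply/eqP; rewrite cards_eq0; apply/eqP/setP => p; rewrite !inE.
      apply/negbTE/negP => /andP [_ /andP [lt _]].
      by have := ltn_ord p.2; lia.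
    have : n = 0%N \/ n = 1%N by lia.
    by case=> ->; rewrite /= ?ln_1; lra.
  set t := trunc_log 2 (2 * n).
  have tK : K * (trunc_log 2 K).+1 <= 2 * n * t.+1.
    by apply: leq_mul => //; rewrite ltnS; apply: leq_trunc_log.
  have nb : (#|H| <= 12 * n + 48 * n * t.+1)%N.
    move: tK hHr cH; rewrite -!mulnA; generalize (K * (trunc_log 2 K).+1) => X.
    generalize (n * t.+1) => Y; lia.
  have rb := le_INR _ _ (leP nb).
  change (Rle (INR #|H|) (INR (Nat.add (Nat.mul 12 n) (Nat.mul (Nat.mul 48 n) (S t))))) in rb.
  rewrite plus_INR !mult_INR (S_INR t) in rb.
  have e12 : INR 12 = IZR 12 by simpl; lra.
  have e48 : INR 48 = IZR 48 by simpl; lra.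
  rewrite e12 e48 in rb.
  have hN : Rle (IZR 2) (INR n) by have := le_INR _ _ (leP n2); simpl; lra.
  have hl2 := ln_lt_2.
  have hx : Rle (ln (IZR 2)) (ln (INR n)) by apply: ln_le'; lra.
  have ht : Rle (IZR 0) (INR t) by apply: pos_INR.
  have htl : Rle (Rmult (INR t) (ln (IZR 2))) (Rplus (ln (IZR 2)) (ln (INR n))).
    have p2 : (2 ^ t <= 2 * n)%N by apply: trunc_logP => //; lia.
    have := le_INR _ _ (leP p2); rewrite INR_expn2.
    change (Rle (pow (IZR 2) t) (INR (Nat.mul 2 n)) -> Rle (Rmult (INR t) (ln (IZR 2))) (Rplus (ln (IZR 2)) (ln (INR n)))).
    rewrite mult_INR => hp2.
    rewrite -ln_pow; last lra.
    rewrite -ln_mult; [|lra|lra].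
    apply: ln_le'; first by apply: pow_lt; lra.
    by move: hp2; simpl; lra.
  by apply: (real_bound hN hl2 hx ht htl rb).
Qed.
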